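(* Let $L\subseteq\Sigma^*$ be accepted by an end-decisive MM-QFA with bounded positive one-sided error and positive amplitude. Then there exists an end-decisive MM-QFA that accepts $\Sigma^*\setminus L$ with bounded error.
   Context: A measure-many quantum finite automaton (MM-QFA) over $\Sigma$ is a tuple $(Q,\Sigma,\{U_\sigma\}_{\sigma\in\Sigma\cup\{\$\}},q_0,Q_{acc},Q_{rej})$ with $Q$ finite indexing an orthonormal basis of $\mathbb{C}^Q$, end-marker $\$\notin\Sigma$, unitary $U_\sigma$, initial state $q_0$, and $Q$ partitioned into $Q_{acc},Q_{rej},Q_{non}$ with orthogonal projections $P_{acc},P_{rej},P_{non}$. On input $x$ it processes $x\$$ maintaining $(\psi,p_{acc},p_{rej})$, initially $(|q_0\rangle,0,0)$; on reading $\sigma$: $\psi'=U_\sigma\psi$, $p_{acc}\mathrel{+}=\|P_{acc}\psi'\|^2$, $p_{rej}\mathrel{+}=\|P_{rej}\psi'\|^2$, $\psi\leftarrow P_{non}\psi'$; the acceptance probability $p(x)$ is the final $p_{acc}$. It is end-decisive if $P_{acc}\psi'=0$ after reading every non-end-marker symbol, on every input. It accepts with positive amplitude if, on every input and at every step, the coordinates of $\psi'$ on the accepting basis states are non-negative reals. It accepts $L$ with bounded positive one-sided error if there is $c>0$ with $p(x)>c$ for $x\in L$ and $p(x)=0$ for $x\notin L$; it accepts a language $K$ with bounded error if for some $\lambda$ and $\epsilon>0$, $p(x)>\lambda+\epsilon$ for $x\in K$ and $p(x)<\lambda-\epsilon$ for $x\notin K$. *)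

(* Defs.v *)
From HB Require Import structures.
From mathcomp Require Import all_boot all_order all_algebra.
From mathcomp Require Import sesquilinear spectral.
From mathcomp Require Import complex.
From mathcomp Require Import reals.
Set Implicit Arguments. Unset Strict Implicit. Unset Printing Implicit Defensive.
Import Order.TTheory GRing.Theory Num.Theory.
Local Open Scope ring_scope.

Inductive qclass := Acc | Rej | Non.
Definition qclass_eqb (a b : qclass) : bool :=
  match a, b with Acc, Acc | Rej, Rej | Non, Non => true | _, _ => false end.

Section MMQFA.
Variables (R : realType) (Sigma : finType).
Local Notation C := (R[i]).

(* Basis states are 'I_n; the tape alphabet is
   option Sigma, where [None] is the end-marker $ and [Some s] is s in Sigma. *)
Record mmqfa := MMQFA {
  nst : nat;
  U : option Sigma -> 'M[C]_nst;
  U_unitary : forall s, U s \is unitarymx;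
  q0 : 'I_nst;
  cls : 'I_nst -> qclass
}.
Arguments nst m : clear implicits.
Arguments U m _ : clear implicits.
Arguments q0 m : clear implicits.
Arguments cls m _ : clear implicits.

Variable M : mmqfa.

Definition proj (k : qclass) : 'M[C]_(nst M) :=
  diag_mx (\row_i (if qclass_eqb (cls M i) k then 1 else 0)).

Definition sqnorm (v : 'cV[C]_(nst M)) : R :=
  \sum_i ((complex.Re (v i 0)) ^+ 2 + (complex.Im (v i 0)) ^+ 2).

Definition psi0 : 'cV[C]_(nst M) := \col_i (if i == q0 M then 1 else 0).

(* configuration (psi, p_acc, p_rej) *)
Definition config := ('cV[C]_(nst M) * R * R)%type.

Definition step (c : config) (s : option Sigma) : config :=
  let: (psi, pa, pr) := c in
  let psi' := U M s *m psi in
  (proj Non *m psi', pa + sqnorm (proj Acc *m psi'), pr + sqnorm (proj Rej *m psi')).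

Definition run (w : seq (option Sigma)) : config := foldl step (psi0, 0, 0) w.

Definition psi_after (x : seq Sigma) : 'cV[C]_(nst M) :=
  (run (map Some x)).1.1.

Definition acc_prob (x : seq Sigma) : R :=
  (run (rcons (map Some x) None)).1.2.

Definition end_decisive : Prop :=
  forall (x : seq Sigma) (s : Sigma),
    proj Acc *m (U M (Some s) *m psi_after x) = 0.

(* accepts with positive amplitude: at every step on every input, the
   coordinates of psi' on accepting basis states are non-negative reals *)
Definition positive_amplitude : Prop :=
  forall (x : seq Sigma) (s : option Sigma) (i : 'I_(nst M)),
    cls M i = Acc -> 0 <= (U M s *m psi_after x) i 0.

Definition accepts_one_sided (L : seq Sigma -> Prop) : Prop :=
  exists c : R, 0 < c /\
    forall x, (L x -> c < acc_prob x) /\ (~ L x -> acc_prob x = 0).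

Definition accepts_bounded (K : seq Sigma -> Prop) : Prop :=
  exists lambda eps : R, 0 < eps /\
    forall x, (K x -> lambda + eps < acc_prob x) /\
              (~ K x -> acc_prob x < lambda - eps).

End MMQFA.
Arguments nst {R Sigma} m.
Arguments U {R Sigma} m _.
Arguments q0 {R Sigma} m.
Arguments cls {R Sigma} m _.

(* Main.v *)
Require Import Defs.
From HB Require Import structures.
From mathcomp Require Import all_boot all_order all_algebra.
From mathcomp Require Import sesquilinear spectral complex reals ring lra.
Import Order.TTheory GRing.Theory Num.Theory.
Local Open Scope ring_scope.
Local Open Scope sesquilinear_scope.
Set Implicit Arguments. Unset Strict Implicit. Unset Printing Implicit Defensive.



Section LinAlg.
Variable R : realType.
Local Notation C := (R[i]).
Local Notation toC := (real_complex R).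

Lemma conjC_toC (x : R) : Num.conj (toC x) = toC x.
Proof. by apply/eqP; rewrite eq_complex /= oppr0 !eqxx. Qed.

Lemma map_toC_tC m n (A : 'M[R]_(m, n)) : (map_mx toC A)^t* = map_mx toC A^T.
Proof.
apply/matrixP => i j; rewrite !mxE.
exact: conjC_toC.
Qed.

Lemma unitary_map_toC n (A : 'M[R]_n) : A *m A^T = 1%:M -> map_mx toC A \is unitarymx.
Proof.
move=> h; apply/unitarymxP; rewrite map_toC_tC -map_mxM h.
exact: map_mx1.
Qed.

Variable N : nat.

Definition wnorm (w : 'cV[R]_N) : R := \sum_i w i 0 ^+ 2.

Definition hhR (w : 'cV[R]_N) : 'M[R]_N := 1%:M - (2 / wnorm w) *: (w *m w^T).
Definition hh (w : 'cV[R]_N) : 'M[C]_N := map_mx toC (hhR w).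

Lemma wwT_sym (w : 'cV[R]_N) : (w *m w^T)^T = w *m w^T.
Proof. by rewrite trmx_mul trmxK. Qed.

Lemma hhR_sym w : (hhR w)^T = hhR w.
Proof. by rewrite /hhR linearB /= linearZ /= trmx1 wwT_sym. Qed.

Lemma wTw (w : 'cV[R]_N) : w^T *m w = (wnorm w)%:M.
Proof.
rewrite [LHS]mx11_scalar; congr scalar_mx; rewrite mxE /wnorm.
by apply: eq_bigr => i _; rewrite mxE expr2.
Qed.

Lemma hhR_sq w : wnorm w != 0 -> hhR w *m hhR w = 1%:M.
Proof.
move=> nz; rewrite /hhR.
set c := 2 / wnorm w.
have PP : (w *m w^T) *m (w *m w^T) = wnorm w *: (w *m w^T).
  by rewrite mulmxA -(mulmxA w) wTw mul_mx_scalar scalemxAl.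
rewrite mulmxBl !mulmxBr !mul1mx mulmx1 -scalemxAr -scalemxAl PP !scalerA.
have -> : c * c * wnorm w = c + c by rewrite /c -mulrA mulfVK //; field.
rewrite scalerDl; set Q := c *: _.
have -> : Q - (Q + Q) = - Q by rewrite opprD addrA subrr sub0r.
by rewrite opprK subrK.
Qed.

Lemma hhR_orth w : wnorm w != 0 -> hhR w *m (hhR w)^T = 1%:M.
Proof. by move=> nz; rewrite hhR_sym hhR_sq. Qed.

Lemma hh_unitary w : wnorm w != 0 -> hh w \is unitarymx.
Proof. by move=> nz; apply: unitary_map_toC; apply: hhR_orth. Qed.

Lemma hh_sq w : wnorm w != 0 -> hh w *m hh w = 1%:M.
Proof. by move=> nz; rewrite -map_mxM hhR_sq // map_mx1. Qed.

Lemma hhE w i j : hh w i j = toC ((i == j)%:R - 2 / wnorm w * (w i 0 * w j 0)).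
Proof.
by rewrite /hh /hhR !mxE big_ord1 !mxE.
Qed.

Lemma hh_mul w (y : 'cV[C]_N) i :
  (hh w *m y) i 0 = y i 0 - toC (2 / wnorm w * w i 0) * \sum_j toC (w j 0) * y j 0.
Proof.
rewrite mxE.
under eq_bigr => j _ do rewrite hhE rmorphB /= mulrBl.
rewrite sumrB; congr (_ - _).
  rewrite (bigD1 i) //= eqxx big1 ?addr0 ?mul1r //.
  by move=> j /negPf; rewrite eq_sym => ->; rewrite mul0r.
rewrite mulr_sumr; apply: eq_bigr => j _.
rewrite !rmorphM /=; ring.
Qed.

Lemma one_unitary : (1%:M : 'M[C]_N) \is unitarymx.
Proof. by apply/unitarymxP; rewrite mul1mx trmx1 map_mx1. Qed.


Lemma diag_hh_comm (d : 'rV[C]_N) (w : 'cV[R]_N) :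
  (forall i, w i 0 != 0 -> d 0 i = 1) -> diag_mx d *m hh w = hh w *m diag_mx d.
Proof.
move=> hd; rewrite mul_diag_mx mul_mx_diag; apply/matrixP => i j; rewrite mxE [RHS]mxE hhE.
have [->|ne] := eqVneq i j; first by rewrite mulrC.
rewrite /= sub0r.
have [wi0|wi] := eqVneq (w i 0) 0.
  by rewrite wi0 !mul0r mulr0 oppr0 rmorph0 mulr0 mul0r.
have [wj0|wj] := eqVneq (w j 0) 0.
  by rewrite wj0 !mulr0 oppr0 rmorph0 mulr0 mul0r.
by rewrite (hd _ wi) (hd _ wj) mul1r mulr1.
Qed.

Lemma diag_hh_id (d : 'rV[C]_N) (w : 'cV[R]_N) :
  (forall i, d 0 i != 0 -> w i 0 = 0) -> diag_mx d *m hh w = diag_mx d.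
Proof.
move=> hd; rewrite mul_diag_mx; apply/matrixP => i j; rewrite mxE hhE [RHS]mxE.
have [di0|di] := eqVneq (d 0 i) 0; first by rewrite di0 mul0r mul0rn.
rewrite (hd _ di) mul0r mulr0 subr0.
by case: (i == j); rewrite /= ?rmorph1 ?rmorph0 ?mulr1 ?mulr0.
Qed.

End LinAlg.

Lemma blk_unitary (R : realType) n m (A : 'M[R[i]]_n) :
  A \is unitarymx -> block_mx A 0 0 (1%:M : 'M_m) \is unitarymx.
Proof.
move/unitarymxP => h; apply/unitarymxP.
rewrite tr_block_mx map_block_mx mulmx_block !trmx0 !map_mx0 !mulmx0 !mul0mx.
by rewrite h !addr0 add0r trmx1 map_mx1 mul1mx -scalar_mx_block.
Qed.

Section Sqn.
Variable R : realType.
Local Notation C := (R[i]).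
Local Notation toC := (real_complex R).

Definition sqn n (v : 'cV[C]_n) : R :=
  \sum_i ((complex.Re (v i 0)) ^+ 2 + (complex.Im (v i 0)) ^+ 2).

Lemma conjM_self (z : C) : Num.conj z * z = toC (complex.Re z ^+ 2 + complex.Im z ^+ 2).
Proof.
case: z => a b. apply/eqP; rewrite eq_complex /=. apply/andP; split; apply/eqP;
rewrite /=; ring.
Qed.

Lemma sqn_toC n (v : 'cV[C]_n) : toC (sqn v) = (v^t* *m v) 0 0.
Proof.
rewrite /sqn rmorph_sum mxE; apply: eq_bigr => i _.
by rewrite !mxE conjM_self.
Qed.

Lemma sqn_unitary n (A : 'M[C]_n) v : A \is unitarymx -> sqn (A *m v) = sqn v.
Proof.
move/unitarymxP => h; apply: (@complexI R); rewrite !sqn_toC.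
have h' : A^t* *m A = 1%:M by apply: mulmx1C.
by rewrite trmx_mul map_mxM -mulmxA (mulmxA (A^t*)) h' mul1mx.
Qed.

End Sqn.

Section Gen.
Variables (R : realType) (Sigma : finType) (M : mmqfa R Sigma).

Lemma run_rcons w s : run M (rcons w s) = step (run M w) s.
Proof. by rewrite /run foldl_rcons. Qed.

Lemma psi_after_nil : psi_after M [::] = psi0 M.
Proof. by []. Qed.

Lemma psi_after_rcons x s :
  psi_after M (rcons x s) = proj M Non *m (U M (Some s) *m psi_after M x).
Proof.
rewrite /psi_after map_rcons run_rcons.
by case: (run M (map Some x)) => [[psi pa] pr].
Qed.

Lemma pa_zero x : end_decisive M -> (run M (map Some x)).2 = 0 -> True.
Proof. by []. Qed.

Lemma sqnorm0 : sqnorm (0 : 'cV[R[i]]_(nst M)) = 0.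
Proof. by rewrite /sqnorm big1 // => i _; rewrite mxE /= expr0n /= addr0. Qed.

Lemma pa_zero' x : end_decisive M -> (run M (map Some x)).1.2 = 0.
Proof.
move=> ed; elim/last_ind: x => [|x s IH] //.
rewrite map_rcons run_rcons.
have := ed x s; rewrite /psi_after.
case: (run M (map Some x)) IH => [[psi pa] pr] /= -> ->.
by rewrite sqnorm0 addr0.
Qed.

Lemma acc_probE x : end_decisive M ->
  acc_prob M x = sqnorm (proj M Acc *m (U M None *m psi_after M x)).
Proof.
move=> ed; rewrite /acc_prob run_rcons /psi_after.
have := pa_zero' x ed.
by case: (run M (map Some x)) => [[psi pa] pr] /= ->; rewrite add0r.
Qed.
End Gen.


Section Gen2.
Variables (R : realType) (Sigma : finType) (M : mmqfa R Sigma).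

Lemma projE k (v : 'cV[R[i]]_(nst M)) i j :
  (proj M k *m v) i j = if qclass_eqb (cls M i) k then v i j else 0.
Proof. by rewrite /proj mul_diag_mx !mxE; case: ifP => _; rewrite ?mul1r ?mul0r. Qed.

Lemma sqnorm_proj_le k v : sqnorm (proj M k *m v) <= sqnorm v.
Proof.
rewrite /sqnorm; apply: ler_sum => i _; rewrite projE.
case: ifP => _ //=.
by rewrite expr0n /= addr0 addr_ge0 // sqr_ge0.
Qed.

Lemma sqnorm_U s v : sqnorm (U M s *m v) = sqnorm v.
Proof. exact: (sqn_unitary v (U_unitary M s)). Qed.

Lemma sqnorm_psi0 : sqnorm (psi0 M) = 1.
Proof.
rewrite /sqnorm (bigD1 (q0 M)) //= big1 => [|i ne]; rewrite !mxE.
  by rewrite eqxx /= expr1n expr0n /= !addr0.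
by rewrite (negPf ne) /= expr0n /= addr0.
Qed.

Lemma sqnorm_psi_le x : sqnorm (psi_after M x) <= 1.
Proof.
elim/last_ind: x => [|x s IH]; first by rewrite psi_after_nil sqnorm_psi0.
rewrite psi_after_rcons; apply: le_trans (sqnorm_proj_le _ _) _.
by rewrite sqnorm_U.
Qed.

End Gen2.

Section Constr.
Variables (R : realType) (Sigma : finType) (M : mmqfa R Sigma).
Local Notation C := (R[i]).
Local Notation toC := (real_complex R).
Local Notation n := (nst M).
Local Notation N := (n + 3)%N.

Definition kr : 'I_3 := @Ordinal 3 0 isT.
Definition ka : 'I_3 := @Ordinal 3 1 isT.
Definition kz : 'I_3 := @Ordinal 3 2 isT.
Definition iA (i : 'I_n) : 'I_N := lshift 3 i.
Definition ir : 'I_N := rshift n kr.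
Definition ia : 'I_N := rshift n ka.
Definition iz : 'I_N := rshift n kz.

Lemma splitA i : split (iA i) = inl i. Proof. exact: (unsplitK (inl _ i)). Qed.
Lemma splitR (k : 'I_3) : split (rshift n k) = inr k. Proof. exact: (unsplitK (inr _ k)). Qed.

Lemma ordN_case (P : 'I_N -> Prop) :
  (forall i, P (iA i)) -> P ir -> P ia -> P iz -> forall j, P j.
Proof.
move=> hA hr ha hz j; case: (split_ordP j) => [i ->|k ->]; first exact: hA.
case: k => [[|[|[|k]]] hk] //.
- by have -> : Ordinal hk = kr by apply: val_inj.
- by have -> : Ordinal hk = ka by apply: val_inj.
- by have -> : Ordinal hk = kz by apply: val_inj.
Qed.

Lemma sumN (V : nmodType) (f : 'I_N -> V) :
  \sum_j f j = \sum_i f (iA i) + f ir + f ia + f iz.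
Proof.
rewrite big_split_ord /= !big_ord_recl big_ord0 addr0 !addrA.
have -> : rshift n ord0 = ir by apply: val_inj.
have -> : rshift n (lift ord0 ord0) = ia by apply: val_inj.
by have -> : rshift n (lift ord0 (lift ord0 ord0)) = iz by apply: val_inj.
Qed.

Definition isAcc (i : 'I_n) := qclass_eqb (cls M i) Acc.
Definition isNon (i : 'I_n) := qclass_eqb (cls M i) Non.
Definition q0M := q0 M.

Definition Kacc : R := \sum_(i | isAcc i) 1.
Definition tt : R := 1 / (Kacc + 1).

Definition wS : 'cV[R]_N := \col_j ((j == iA q0M)%:R - (j == iz)%:R).
Definition wB : 'cV[R]_N := \col_j ((j == iA q0M)%:R + 2 * (j == ir)%:R).
Definition wW : 'cV[R]_N := \col_j (match split j with
   | inl i => if isAcc i then - tt else 0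
   | inr k => if val k == 2%N then 0 else -1 end).

Definition cls' (j : 'I_N) : qclass :=
  match split j with
  | inl i => if isNon i || (i == q0M) then Non else Rej
  | inr k => if val k == 0%N then Non else if val k == 1%N then Acc else Rej
  end.

Definition Ublk s : 'M[C]_N := block_mx (U M s) 0 0 1%:M.
Definition Smx : 'M[C]_N := if isNon q0M then 1%:M else hh wS.
Definition Tmx (s : option Sigma) : 'M[C]_N :=
  match s with Some _ => Smx *m Ublk s | None => hh wW *m Ublk None end.
Definition Bmx : 'M[C]_N := hh wB.
Definition U' s : 'M[C]_N := Bmx *m Tmx s *m Bmx.

Lemma Kacc_ge0 : 0 <= Kacc.
Proof. by apply: sumr_ge0 => i _; rewrite ler01. Qed.

Lemma wS_norm : wnorm wS = 2.
Proof.
rewrite /wnorm sumN !mxE /= (bigD1 q0M) //= big1 => [|i ne].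
  rewrite !mxE /iA /ir /ia /iz !eq_shift !eqxx /=. 
  ring.
by rewrite /wS !mxE /iA /iz !eq_shift (negPf ne) /= subr0 expr0n.
Qed.

Lemma wB_norm : wnorm wB = 5%:R.
Proof.
rewrite /wnorm sumN !mxE /= (bigD1 q0M) //= big1 => [|i ne].
  rewrite !mxE /iA /ir /ia /iz !eq_shift !eqxx /=.
  ring.
by rewrite /wB !mxE /iA /ir !eq_shift (negPf ne) /= mulr0 addr0 expr0n.
Qed.

Lemma wW_norm_gt0 : 0 < wnorm wW.
Proof.
rewrite /wnorm sumN !mxE /ir /ia /iz !splitR /=.
have : 0 <= \sum_i wW (iA i) 0 ^+ 2 by apply: sumr_ge0 => i _; exact: sqr_ge0.
rewrite sqrrN expr1n expr0n /=; lra.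
Qed.

Lemma Ublk_unitary s : Ublk s \is unitarymx.
Proof. exact: (blk_unitary 3 (U_unitary M s)). Qed.

Lemma Smx_unitary : Smx \is unitarymx.
Proof.
rewrite /Smx; case: ifP => _; first exact: one_unitary.
by apply: hh_unitary; rewrite wS_norm pnatr_eq0.
Qed.

Lemma Bmx_unitary : Bmx \is unitarymx.
Proof. by apply: hh_unitary; rewrite wB_norm pnatr_eq0. Qed.

Lemma W_unitary : hh wW \is unitarymx.
Proof. by apply: hh_unitary; rewrite gt_eqF // wW_norm_gt0. Qed.

Lemma Tmx_unitary s : Tmx s \is unitarymx.
Proof.
case: s => [s|].
  exact: (mul_unitarymx Smx_unitary (Ublk_unitary _)).
exact: (mul_unitarymx W_unitary (Ublk_unitary _)).
Qed.

Lemma U'_unitary s : U' s \is unitarymx.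
Proof. exact: (mul_unitarymx (mul_unitarymx Bmx_unitary (Tmx_unitary s)) Bmx_unitary). Qed.

Definition M' : mmqfa R Sigma := MMQFA U'_unitary (iA q0M) cls'.

End Constr.


Ltac cfin := apply/eqP; rewrite eq_complex /=; apply/andP; split; apply/eqP; first [lra | field | ring].

Section Sem.
Variables (R : realType) (Sigma : finType) (M : mmqfa R Sigma).
Local Notation C := (R[i]).
Local Notation toC := (real_complex R).
Local Notation n := (nst M).
Local Notation N := (n + 3)%N.

Lemma sum_wS (y : 'cV[C]_N) :
  \sum_j toC (wS M j 0) * y j 0 = y (iA (q0M M)) 0 - y (iz M) 0.
Proof.
have h : \sum_(i | i != q0M M) toC (wS M (iA i) 0) * y (iA i) 0 = 0.
  by apply: big1 => i ne; rewrite /wS !mxE /iA /iz !eq_shift (negPf ne) subr0 rmorph0 mul0r.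
rewrite sumN (bigD1 (q0M M)) //= h /wS !mxE /iA /ir /ia /iz !eq_shift /=.
by rewrite eqxx !subr0 rmorph1 mul1r !rmorph0 !mul0r !addr0 sub0r rmorphN rmorph1 mulN1r.
Qed.

Lemma sum_wB (y : 'cV[C]_N) :
  \sum_j toC (wB M j 0) * y j 0 = y (iA (q0M M)) 0 + toC 2 * y (ir M) 0.
Proof.
have h : \sum_(i | i != q0M M) toC (wB M (iA i) 0) * y (iA i) 0 = 0.
  by apply: big1 => i ne; rewrite /wB !mxE /iA /ir !eq_shift (negPf ne) mulr0 addr0 rmorph0 mul0r.
rewrite sumN (bigD1 (q0M M)) //= h /wB !mxE /iA /ir /ia /iz !eq_shift /=.
by rewrite eqxx !mulr0 !mulr1 !addr0 rmorph1 mul1r !rmorph0 !mul0r !addr0 add0r.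
Qed.

Lemma sum_wW (y : 'cV[C]_N) :
  \sum_j toC (wW M j 0) * y j 0 =
  - (toC (tt M) * \sum_(i | isAcc i) y (iA i) 0) - y (ir M) 0 - y (ia M) 0.
Proof.
rewrite sumN /wW !mxE /ir /ia /iz !splitR /= rmorph0 mul0r addr0.
rewrite rmorphN rmorph1 !mulN1r; congr (_ - _ - _).
rewrite mulr_sumr -sumrN (bigID (@isAcc _ _ M)) /= addrC big1 ?add0r => [|i ni].
  by apply: eq_bigr => i hi; rewrite mxE splitA hi rmorphN mulNr.
by rewrite mxE splitA (negPf ni) rmorph0 mul0r.
Qed.

Definition alph : C := toC (3 / 5).
Definition bet : C := toC (- (4 / 5)).

Definition lift (u : 'cV[C]_n) : 'cV[C]_N :=
  col_mx (alph *: u) (\col_(k < 3) (if val k == 0%N then bet else 0)).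

Lemma liftA u i : lift u (iA i) 0 = alph * u i 0.
Proof. by rewrite /lift /iA col_mxEu mxE. Qed.
Lemma liftr u : lift u (ir M) 0 = bet.
Proof. by rewrite /lift /ir col_mxEd mxE. Qed.
Lemma lifta u : lift u (ia M) 0 = 0.
Proof. by rewrite /lift /ia col_mxEd mxE. Qed.
Lemma liftz u : lift u (iz M) 0 = 0.
Proof. by rewrite /lift /iz col_mxEd mxE. Qed.

Lemma Ublk_lift s u : Ublk M s *m lift u = lift (U M s *m u).
Proof.
by rewrite /Ublk /lift mul_block_col !mul0mx !addr0 add0r mul1mx scalemxAr.
Qed.

Lemma Sentry (y : 'cV[C]_N) j :
  (Smx M *m y) j 0 = if isNon (q0M M) then y j 0
                     else y j 0 - toC (wS M j 0) * (y (iA (q0M M)) 0 - y (iz M) 0).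
Proof.
rewrite /Smx; case: ifP => _; first by rewrite mul1mx.
by rewrite hh_mul wS_norm sum_wS divff ?pnatr_eq0 // mul1r.
Qed.

Lemma SliftA v i : (Smx M *m lift v) (iA i) 0 =
  if ~~ isNon (q0M M) && (i == q0M M) then 0 else alph * v i 0.
Proof.
rewrite Sentry; case: ifP => hq /=; first by rewrite liftA.
rewrite !liftA liftz subr0 /wS mxE /iA /iz !eq_shift subr0.
have [->|ne] := eqVneq i (q0M M); first by rewrite rmorph1 mul1r subrr.
by rewrite rmorph0 mul0r subr0.
Qed.

Lemma Sliftr v : (Smx M *m lift v) (ir M) 0 = bet.
Proof.
rewrite Sentry liftr; case: ifP => // _.
by rewrite /wS mxE /iA /ir /iz !eq_shift /= subrr rmorph0 mul0r subr0.
Qed.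

Lemma Slifta v : (Smx M *m lift v) (ia M) 0 = 0.
Proof.
rewrite Sentry lifta; case: ifP => // _.
by rewrite /wS mxE /iA /ia /iz !eq_shift /= subrr rmorph0 mul0r subr0.
Qed.

Lemma projE' k (v : 'cV[C]_N) (j : 'I_N) c :
  (proj (M' M) k *m v) j c = if qclass_eqb (@cls' _ _ M j) k then v j c else 0.
Proof. exact: (projE (M := M' M) k v j c). Qed.

Lemma projNon_S v :
  proj (M' M) Non *m (Smx M *m lift v) = lift (proj M Non *m v).
Proof.
apply/matrixP => j c; rewrite (ord1 c) {c}; move: j; apply: ordN_case => [i|||].
- rewrite (projE (M := M' M)) /= /cls' splitA liftA projE SliftA -/(isNon i).
  have [->|ne] := eqVneq i (q0M M); rewrite ?orbT /=.
    by case: (isNon (q0M M)) => /=; rewrite ?mulr0.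
  by rewrite orbF andbF; case: (isNon i) => /=; rewrite ?mulr0.
- by rewrite (projE (M := M' M)) /= /cls' splitR /= Sliftr liftr.
- by rewrite (projE (M := M' M)) /= /cls' splitR /= lifta.
- by rewrite (projE (M := M' M)) /= /cls' splitR /= liftz.
Qed.

Lemma projAcc_S v : proj (M' M) Acc *m (Smx M *m lift v) = 0.
Proof.
apply/matrixP => j c; rewrite (ord1 c) {c} [RHS]mxE; move: j; apply: ordN_case => [i|||].
- by rewrite (projE (M := M' M)) /= /cls' splitA; case: (isNon i || _).
- by rewrite (projE (M := M' M)) /= /cls' splitR.
- by rewrite (projE (M := M' M)) /= /cls' splitR /= Slifta.
- by rewrite (projE (M := M' M)) /= /cls' splitR.
Qed.

Lemma Wlift_a v : (hh (wW M) *m lift v) (ia M) 0 =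
  toC (2 / wnorm (wW M)) * (toC (4/5) - toC (tt M) * alph * \sum_(i | isAcc i) v i 0).
Proof.
rewrite hh_mul sum_wW lifta liftr.
have -> : wW M (ia M) 0 = -1 by rewrite /wW mxE /ia splitR.
under eq_bigr => i _ do rewrite liftA.
rewrite -mulr_sumr /bet !rmorphM !rmorphN /= rmorph1.
ring.
Qed.

Lemma sqnorm_projAcc (y : 'cV[C]_N) :
  sqnorm (M := M' M) (proj (M' M) Acc *m y) =
  complex.Re (y (ia M) 0) ^+ 2 + complex.Im (y (ia M) 0) ^+ 2.
Proof.
rewrite /sqnorm (sumN (fun j => complex.Re ((proj (M' M) Acc *m y) j 0) ^+ 2 +
   complex.Im ((proj (M' M) Acc *m y) j 0) ^+ 2)).
rewrite big1 => [|i _]; rewrite !(projE (M := M' M)) /= /cls' ?splitA ?splitR /=.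
  by rewrite expr0n /= !add0r !addr0.
by case: (isNon i || _); rewrite /= expr0n /= addr0.
Qed.

Lemma projNon_B : proj (M' M) Non *m Bmx M = Bmx M *m proj (M' M) Non.
Proof.
rewrite /proj /Bmx; apply: diag_hh_comm => j; rewrite mxE; move: j.
apply: ordN_case => [i|||]; rewrite /wB mxE /=; rewrite /cls' ?splitA ?splitR /= /iA /ir /ia /iz !eq_shift //=.
- have [->|ne] := eqVneq i (q0M M); first by rewrite orbT.
  by rewrite /= ?mulr0n ?mulr0 ?addr0 ?eqxx.
- by rewrite /= ?mulr0n ?mulr0 ?addr0 ?eqxx.
- by rewrite /= ?mulr0n ?mulr0 ?addr0 ?eqxx.
Qed.

Lemma projAcc_B : proj (M' M) Acc *m Bmx M = proj (M' M) Acc.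
Proof.
rewrite /proj /Bmx; apply: diag_hh_id => j; rewrite mxE; move: j.
apply: ordN_case => [i|||]; rewrite /wB mxE /=; rewrite /cls' ?splitA ?splitR /= /iA /ir /ia /iz !eq_shift //=.
- by case: (isNon i || _); rewrite /= eqxx.
- move=> h; by rewrite eqxx in h.
- move=> _; by rewrite /= ?mulr0n ?mulr0 ?addr0.
- move=> h; by rewrite eqxx in h.
Qed.

Lemma BB : Bmx M *m Bmx M = 1%:M.
Proof. by rewrite /Bmx hh_sq // wB_norm pnatr_eq0. Qed.

Lemma psi0'E (j : 'I_N) : psi0 (M' M) j 0 = if j == iA (q0M M) then 1 else 0.
Proof. by rewrite mxE. Qed.

Lemma B_psi0 : Bmx M *m psi0 (M' M) = lift (psi0 M).
Proof.
apply/matrixP => j c; rewrite (ord1 c) {c}.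
rewrite /Bmx hh_mul sum_wB wB_norm !psi0'E eqxx /ir /iA eq_rlshift mulr0 addr0 mulr1.
move: j; apply: ordN_case => [i|||]; rewrite /wB mxE /iA /ir /ia /iz !eq_shift /=.
- rewrite liftA mxE /alph mulr0 addr0.
  case: (i == q0M M); rewrite /= ?rmorph0 ?mulr0 ?subr0 ?mulr1 //.
  by rewrite -(rmorph1 (real_complex R)) -rmorphB; congr (_ %:C)%C; field.
- by rewrite (liftr (psi0 M)) /bet; cfin.
- by rewrite (lifta (psi0 M)); cfin.
- by rewrite (liftz (psi0 M)); cfin.
Qed.

Lemma U'B s (l : 'cV[C]_N) :
  U (M' M) s *m (Bmx M *m l) = Bmx M *m (Tmx M s *m l).
Proof. by rewrite /= /U' -!mulmxA (mulmxA (Bmx M) (Bmx M)) BB mul1mx. Qed.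

Lemma psi'E x : psi_after (M' M) x = Bmx M *m lift (psi_after M x).
Proof.
elim/last_ind: x => [|x s IH].
  by rewrite !psi_after_nil -B_psi0 mulmxA BB mul1mx.
rewrite (psi_after_rcons (M' M)) IH U'B (mulmxA (proj (M' M) Non)) projNon_B -mulmxA.
by rewrite /Tmx -mulmxA Ublk_lift projNon_S psi_after_rcons.
Qed.

Lemma M'_end_decisive : end_decisive (M' M).
Proof.
move=> x s; rewrite psi'E U'B (mulmxA (proj (M' M) Acc)) projAcc_B /Tmx -mulmxA Ublk_lift.
exact: projAcc_S.
Qed.

Lemma acc_prob_M' x :
  let amp := (hh (wW M) *m lift (U M None *m psi_after M x)) (ia M) 0 in
  acc_prob (M' M) x = complex.Re amp ^+ 2 + complex.Im amp ^+ 2.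
Proof.
rewrite /= (acc_probE _ M'_end_decisive) psi'E U'B (mulmxA (proj (M' M) Acc)) projAcc_B /Tmx -mulmxA Ublk_lift.
exact: sqnorm_projAcc.
Qed.

End Sem.


Section Fin.
Variables (R : realType) (Sigma : finType) (M : mmqfa R Sigma).
Local Notation C := (R[i]).
Local Notation toC := (real_complex R).
Local Notation n := (nst M).

Hypothesis ed : end_decisive M.
Hypothesis pos : positive_amplitude M.

Section X.
Variable x : seq Sigma.
Let v := U M None *m psi_after M x.
Let a i := complex.Re (v i 0).
Let s := \sum_(i | isAcc i) a i.
Let p := \sum_(i | isAcc i) a i ^+ 2.

Lemma accE i : isAcc i -> v i 0 = toC (a i) /\ 0 <= a i.
Proof.
rewrite /isAcc => h.
have hc : cls M i = Acc by move: h; case: (cls M i).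
have := pos x None hc; rewrite -/v lecE /= => /andP [/eqP him hre].
split => //; rewrite /a; move: him; case: (v i 0) => re im /= ->.
by [].
Qed.

Lemma a_le1 i : isAcc i -> a i <= 1.
Proof.
move=> h; have [_ a0] := accE h.
have : a i ^+ 2 <= 1.
  apply: le_trans (@sqnorm_psi_le _ _ M x).
  rewrite -(@sqnorm_U _ _ M None) -/v /sqnorm (bigD1 i) //=.
  have : 0 <= \sum_(j | j != i) (complex.Re (v j 0) ^+ 2 + complex.Im (v j 0) ^+ 2).
    by apply: sumr_ge0 => j _; rewrite addr_ge0 // sqr_ge0.
  have : 0 <= complex.Im (v i 0) ^+ 2 by rewrite sqr_ge0.
  rewrite /a; lra.
nra.
Qed.

Lemma accM_E : acc_prob M x = p.
Proof.
rewrite (acc_probE _ ed) -/v /sqnorm /p (bigID (@isAcc _ _ M)) /= [X in _ + X]big1 ?addr0.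
  apply: eq_bigr => i h; rewrite projE -/(isAcc i) h.
  have [e _] := accE h; rewrite e /= expr0n /= addr0 //.
move=> i h; rewrite projE -/(isAcc i) (negbTE h).
by rewrite /= expr0n /= addr0.
Qed.

Lemma s_bounds : 0 <= s /\ s <= Kacc M /\ p <= s.
Proof.
split; first by apply: sumr_ge0 => i h; have [_ ?] := accE h.
split; first by apply: ler_sum => i h; exact: a_le1.
apply: ler_sum => i h; have [_ a0] := accE h; have a1 := a_le1 h; nra.
Qed.

Lemma p0_s0 : p = 0 -> s = 0.
Proof.
move=> /eqP; rewrite psumr_eq0 => [/allP hall|i h]; last by rewrite sqr_ge0.
rewrite /s big1 // => i h.
have : i \in index_enum 'I_n by rewrite mem_index_enum.
move=> /hall; rewrite h /= sqrf_eq0 => /eqP //.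
Qed.

Lemma accM'_E : acc_prob (M' M) x =
  (2 / wnorm (wW M) * (4/5 - tt M * (3/5) * s)) ^+ 2.
Proof.
rewrite acc_prob_M' Wlift_a -/v.
have -> : \sum_(i | isAcc i) v i 0 = toC s.
  rewrite /s rmorph_sum; apply: eq_bigr => i h; by have [-> _] := accE h.
rewrite /alph -!rmorphM -rmorphB -rmorphM /= expr0n /= addr0.
by congr (_ ^+ 2); ring.
Qed.

Lemma key : exists s p : R, [/\ 0 <= s, s <= Kacc M, p <= s, (p = 0 -> s = 0) &
  acc_prob M x = p /\ acc_prob (M' M) x = (2 / wnorm (wW M) * (4/5 - tt M * (3/5) * s)) ^+ 2].
Proof.
exists s, p; have [? [? ?]] := s_bounds; split => //.
- exact: p0_s0.
- split; [exact: accM_E | exact: accM'_E].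
Qed.

End X.
End Fin.

Theorem lemma4p13 (R : realType) (Sigma : finType) (L : seq Sigma -> Prop)
    (M : mmqfa R Sigma) :
  end_decisive M -> positive_amplitude M -> accepts_one_sided M L ->
  exists M' : mmqfa R Sigma,
    end_decisive M' /\ accepts_bounded M' (fun x => ~ L x).
Proof.
move=> ed pos [c0 [c0pos hL]].
exists (M' M); split; first exact: M'_end_decisive.
have dpos : 0 < wnorm (wW M) := wW_norm_gt0 M.
set d := wnorm (wW M) in dpos *.
have Dpos : 0 < 2 / d by rewrite divr_gt0.
set D := 2 / d in Dpos *.
have Kpos := Kacc_ge0 M.
set K := Kacc M in Kpos *.
have tdef : tt M = 1 / (K + 1) by [].
set t := tt M in tdef *.
have tpos : 0 < t by rewrite tdef divr_gt0 // ltr_wpDl.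
have tK : t * K < 1.
  rewrite tdef mul1r ltr_pdivrMl ?ltr_wpDl // mulr1; lra.
have tc0 : 0 < t * c0 by rewrite mulr_gt0.
set g := t * c0 / (1 + t * c0).
have g0 : 0 < g by rewrite divr_gt0 // ltr_wpDl // ltW.
have gtc : g < t * c0.
  by rewrite /g ltr_pdivrMr ?ltr_wpDl ?ltW // ltr_pMr // ltr_pwDr.
have g1 : g < 1.
  by rewrite /g ltr_pdivrMr ?ltr_wpDl ?ltW // mul1r ltr_pwDl.
set Y1 := 4/5 - 3/5 * g.
have Y1pos : 0 < Y1 by rewrite /Y1; lra.
have Y1lt : Y1 < 4/5 by rewrite /Y1; lra.
set P0 := (D * (4/5)) ^+ 2.
set P1 := (D * Y1) ^+ 2.
have P10 : P1 < P0.
  have h1 : 0 < D * Y1 by rewrite mulr_gt0.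
  have h2 : D * Y1 < D * (4/5) by rewrite ltr_pM2l.
  rewrite /P0 /P1; nra.
have P1pos : 0 <= P1 by rewrite /P1 sqr_ge0.
exists ((P0 + P1) / 2), ((P0 - P1) / 4); split; first by lra.
move=> x; have [s [p [s0 sK ps p0 [eM eM']]]] := key ed pos x.
split.
- move=> nL; have := (proj2 (hL x)) nL; rewrite eM => /p0 s00.
  rewrite eM' -/d -/D -/t s00 mulr0 subr0 -/P0; lra.
- move=> nnL.
  have hc : c0 < acc_prob M x.
    case: (boolP (c0 < acc_prob M x)) => // hf; exfalso; apply: nnL => hLx.
    by move: hf; rewrite ((proj1 (hL x)) hLx).
  rewrite eM in hc.
  have ts : g < t * s by apply: lt_le_trans gtc _; rewrite ler_pM2l //; lra.
  have tsK : t * s <= t * K by rewrite ler_pM2l.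
  have hy0 : 0 < 4/5 - t * (3/5) * s by nra.
  have hy1 : 4/5 - t * (3/5) * s < Y1 by rewrite /Y1; nra.
  have : (D * (4 / 5 - t * (3 / 5) * s)) ^+ 2 < P1.
    have h1 : 0 < D * (4 / 5 - t * (3 / 5) * s) by rewrite mulr_gt0.
    have h2 : D * (4 / 5 - t * (3 / 5) * s) < D * Y1 by rewrite ltr_pM2l.
    rewrite /P1; nra.
  rewrite eM' -/d -/D -/t; lra.
Qed.
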